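(* Let $B$ be a commutative ring with identity and $A$ a subring of $B$ containing the identity. Suppose $A$ is a pm-ring, $A$ is a dense subring of $B$, and $A$ is a weak completely normal subring of $B$. Then the maximal spectrum $\operatorname{Max}(A)$ is homeomorphic to $\operatorname{Max}(B)$.
   Context: All rings are commutative with identity; subrings contain the identity. $\operatorname{spec} R$ is the set of prime ideals of $R$ with the Zariski topology, and $\operatorname{Max}(R)$ is the subspace of maximal ideals. A pm-ring is a ring in which every prime ideal is contained in a unique maximal ideal. A subring $A$ of $B$ is dense in $B$ if for every ideal $I$ of $B$ and every $b\in B\setminus \operatorname{rad}(I)$ there exists $a\in B\setminus\operatorname{rad}(I)$ with $ab\in A$. A subring $A$ of $B$ is a weak completely normal subring of $B$ if for any two distinct maximal ideals $M\neq M'$ of $B$ such that $M\cap A$ and $M'\cap A$ are non-comparable (under inclusion), $\operatorname{cl}_{\operatorname{spec} A}\{M\cap A\}\cap \operatorname{cl}_{\operatorname{spec} A}\{M'\cap A\}=\emptyset$. *)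

(* Defs.v *)
From mathcomp Require Import all_boot all_algebra.
Set Implicit Arguments. Unset Strict Implicit. Unset Printing Implicit Defensive.
Import GRing.Theory.
Local Open Scope ring_scope.

Definition subset_of (R : Type) (I J : R -> Prop) : Prop := forall x, I x -> J x.

Section Ideals.
Variable R : comNzRingType.

Definition is_ideal (I : R -> Prop) : Prop :=
  [/\ I 0, (forall x y, I x -> I y -> I (x - y)) & (forall r x, I x -> I (r * x))].

Definition is_prime (P : R -> Prop) : Prop :=
  [/\ is_ideal P, ~ P 1 & forall x y, P (x * y) -> P x \/ P y].

Definition is_maximal (M : R -> Prop) : Prop :=
  [/\ is_ideal M, ~ M 1 &
      forall J : R -> Prop, is_ideal J -> subset_of M J -> subset_of J M \/ J 1].

Definition rad (I : R -> Prop) : R -> Prop := fun x => exists n : nat, I (x ^+ n).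

Definition pm_ring : Prop :=
  forall P, is_prime P ->
    exists M, [/\ is_maximal M, subset_of P M &
      forall M', is_maximal M' -> subset_of P M' -> M' = M].

(* Zariski closure in spec R of a set X of primes: the intersection of all
   closed sets V(I) = {Q prime | I ⊆ Q} containing X. *)
Definition spec_closure (X : (R -> Prop) -> Prop) : (R -> Prop) -> Prop :=
  fun Q => is_prime Q /\
    forall I : R -> Prop, (forall P, X P -> subset_of I P) -> subset_of I Q.

Definition MaxSpec := {M : R -> Prop | is_maximal M}.

Definition max_closed (Z : MaxSpec -> Prop) : Prop :=
  exists I : R -> Prop, forall M : MaxSpec, Z M <-> subset_of I (proj1_sig M).

End Ideals.

Definition max_continuous (R S : comNzRingType) (g : MaxSpec R -> MaxSpec S) : Prop :=
  forall Z, max_closed Z -> max_closed (fun M => Z (g M)).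

Definition max_homeomorphic (R S : comNzRingType) : Prop :=
  exists (g : MaxSpec R -> MaxSpec S) (h : MaxSpec S -> MaxSpec R),
    [/\ cancel g h, cancel h g, max_continuous g & max_continuous h].

(* A is identified with its image under the injective ring morphism f. *)
Section Subring.
Variables (A B : comNzRingType) (f : {rmorphism A -> B}).

Definition contract (M : B -> Prop) : A -> Prop := fun a => M (f a).

Definition dense_subring : Prop :=
  forall I : B -> Prop, is_ideal I -> forall b, ~ rad I b ->
    exists a, ~ rad I a /\ exists x : A, f x = a * b.

Definition weak_completely_normal : Prop :=
  forall M M' : B -> Prop, is_maximal M -> is_maximal M' -> M <> M' ->
    ~ subset_of (contract M) (contract M') -> ~ subset_of (contract M') (contract M) ->
    ~ (exists Q, spec_closure (fun P => P = contract M) Q /\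
                 spec_closure (fun P => P = contract M') Q).
End Subring.

(* Main.v *)
Require Import Defs.
From mathcomp Require Import all_boot all_algebra.
From mathcomp Require classical_sets.
From Stdlib Require Import Classical FunctionalExtensionality PropExtensionality ProofIrrelevance ClassicalEpsilon.
Set Implicit Arguments. Unset Strict Implicit. Unset Printing Implicit Defensive.
Import GRing.Theory.
Local Open Scope ring_scope.

Section Gen.
Variable R : comNzRingType.

Lemma my_ideal0 (I : R -> Prop) : is_ideal I -> I 0.
Proof. by case. Qed.
Lemma my_idealB (I : R -> Prop) x y : is_ideal I -> I x -> I y -> I (x - y).
Proof. by case=> _ H _; apply: H. Qed.
Lemma my_idealM (I : R -> Prop) r x : is_ideal I -> I x -> I (r * x).
Proof. by case=> _ _ H; apply: H. Qed.
Lemma my_idealN (I : R -> Prop) x : is_ideal I -> I x -> I (- x).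
Proof. by move=> iI Ix; rewrite -sub0r; apply: my_idealB => //; apply: my_ideal0. Qed.
Lemma my_idealD (I : R -> Prop) x y : is_ideal I -> I x -> I y -> I (x + y).
Proof. by move=> iI Ix Iy; rewrite -[y]opprK; apply: my_idealB => //; apply: my_idealN. Qed.
Lemma my_idealMr (I : R -> Prop) r x : is_ideal I -> I x -> I (x * r).
Proof. by move=> iI Ix; rewrite mulrC; apply: my_idealM. Qed.

Definition good (L S : R -> Prop) (X : R -> Prop) :=
  [/\ is_ideal X, subset_of L X & forall s, S s -> ~ X s].

Lemma goodI L S X : good L S X -> is_ideal X.
Proof. by case. Qed.

Lemma zorn_ideal (L S : R -> Prop) : is_ideal L -> (forall s, S s -> ~ L s) ->
  exists Q, good L S Q /\ forall K, good L S K -> subset_of Q K -> subset_of K Q.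
Proof.
move=> iL dL.
pose P := fun X : R -> Prop => (forall x, ~ X x) \/ good L S X.
have [] := @classical_sets.Zorn_bigcup R P.
  move=> F FP Ftot.
  case: (classic (exists X, F X /\ good L S X)) => [[X0 [FX0 gX0]]|nog]; last first.
    left=> x [X FX Xx].
    case: (FP X FX) => [H|gX]; first exact: (H x).
    by apply: nog; exists X.
  have memg : forall X x, F X -> X x -> good L S X.
    by move=> X x FX Xx; case: (FP X FX) => // H; case: (H x).
  right; split.
  - split.
    + by exists X0 => //; case: gX0 => iX _ _; apply: my_ideal0.
    + move=> x y [X1 F1 X1x] [X2 F2 X2y].
      case: (Ftot X1 X2 F1 F2) => H.
      * exists X2 => //; exact: (my_idealB (goodI (memg _ _ F2 X2y)) (H x X1x) X2y).
      * exists X1 => //; exact: (my_idealB (goodI (memg _ _ F1 X1x)) X1x (H y X2y)).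
    + move=> r x [X1 F1 X1x]; exists X1 => //.
      exact: (my_idealM r (goodI (memg _ _ F1 X1x)) X1x).
  - by move=> x Lx; exists X0 => //; case: gX0 => _ H _; apply: H.
  - move=> s Ss [X FX Xs]; case: (memg _ _ FX Xs) => _ _ H; exact: (H s Ss Xs).
move=> Q [PQ maxQ].
have gQ : good L S Q.
  case: PQ => // H; exfalso; apply: (maxQ L); last by right; split.
  split; first by move=> x /H.
  move=> sub; apply: (H 0); apply: sub; exact: my_ideal0.
exists Q; split => // K gK QK x Kx.
apply: NNPP => nQx; apply: (maxQ K); last by right.
by split => // /(_ x Kx).
Qed.

Definition multS (S : R -> Prop) := S 1 /\ forall x y, S x -> S y -> S (x * y).

Lemma zorn_prime (L S : R -> Prop) : is_ideal L -> multS S -> (forall s, S s -> ~ L s) ->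
  exists Q, [/\ is_prime Q, subset_of L Q & forall s, S s -> ~ Q s].
Proof.
move=> iL [S1 SM] dL; have [Q [[iQ LQ dQ] maxQ]] := zorn_ideal iL dL.
exists Q; split => //; split => //; first exact: dQ.
move=> x y Qxy; apply: NNPP => /not_or_and [nx ny].
pose J z (w : R) := exists q a, Q q /\ w = q + a * z.
have iJ z : is_ideal (J z).
  split.
  - by exists 0, 0; rewrite mul0r addr0; split => //; exact: my_ideal0.
  - move=> u v [q [a [Qq ->]]] [q' [a' [Qq' ->]]]; exists (q - q'), (a - a'); split.
      exact: my_idealB.
    by rewrite mulrBl opprD addrACA.
  - move=> r u [q [a [Qq ->]]]; exists (r * q), (r * a); split; first exact: my_idealM.
    by rewrite mulrDr mulrA.
have QJ z : subset_of Q (J z) by move=> u Qu; exists u, 0; rewrite mul0r addr0.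
have Jz z : J z z by exists 0, 1; rewrite mul1r add0r; split => //; exact: my_ideal0.
have hit z : ~ Q z -> exists s, S s /\ J z s.
  move=> nz; apply: NNPP => H; apply: nz; apply: (maxQ (J z)) => //.
  split; first exact: iJ.
    by move=> u Lu; apply: QJ; apply: LQ.
  by move=> s Ss Ju; apply: H; exists s.
have [s1 [S1s [q1 [a1 [Qq1 E1]]]]] := hit x nx.
have [s2 [S2s [q2 [a2 [Qq2 E2]]]]] := hit y ny.
apply: (dQ (s1 * s2)); first exact: SM.
rewrite E1 E2 mulrDl !mulrDr.
have e : a1 * x * (a2 * y) = (a1 * a2) * (x * y) by rewrite mulrACA.
rewrite e; apply: my_idealD => //; first by apply: my_idealD => //; apply: my_idealMr.
apply: my_idealD => //; first by apply: my_idealM.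
exact: my_idealM.
Qed.

Lemma exists_max (I : R -> Prop) : is_ideal I -> ~ I 1 ->
  exists M, is_maximal M /\ subset_of I M.
Proof.
move=> iI nI1.
have [|Q [[iQ IQ dQ] maxQ]] := @zorn_ideal I (fun x => x = 1) iI; first by move=> s ->.
exists Q; split; last exact: IQ.
split => //; first exact: dQ.
move=> J iJ QJ; case: (classic (J 1)) => H; [by right | left].
apply: maxQ => //; split => //; first by move=> x /IQ /QJ.
by move=> s -> .
Qed.

Lemma max_prime (M : R -> Prop) : is_maximal M -> is_prime M.
Proof.
move=> [iM nM1 maxM]; split => // x y Mxy.
case: (classic (M x)) => nx; [by left | right].
pose J (w : R) := exists q a, M q /\ w = q + a * x.
have iJ : is_ideal J.
  split.
  - by exists 0, 0; rewrite mul0r addr0; split => //; exact: my_ideal0.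
  - move=> u v [q [a [Qq ->]]] [q' [a' [Qq' ->]]]; exists (q - q'), (a - a'); split.
      exact: my_idealB.
    by rewrite mulrBl opprD addrACA.
  - move=> r u [q [a [Qq ->]]]; exists (r * q), (r * a); split; first exact: my_idealM.
    by rewrite mulrDr mulrA.
have [JM|[q [a [Mq E]]]] := maxM J iJ (fun u Mu => ex_intro _ u (ex_intro _ 0 (conj Mu (esym (etrans (congr1 _ (mul0r x)) (addr0 u)))))).
  by exfalso; apply: nx; apply: JM; exists 0, 1; rewrite mul1r add0r; split => //; exact: my_ideal0.
have -> : y = (q + a * x) * y by rewrite -E mul1r.
rewrite mulrDl -mulrA; apply: my_idealD => //; [exact: my_idealMr | exact: my_idealM].
Qed.

Lemma prime_pow (P : R -> Prop) x n : is_prime P -> P (x ^+ n) -> P x.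
Proof.
move=> [iP nP1 pP]; elim: n => [|n IH]; first by rewrite expr0.
by rewrite exprS => /pP [].
Qed.

Lemma max_ext (M M' : R -> Prop) : is_maximal M -> is_maximal M' -> subset_of M M' -> M = M'.
Proof.
move=> [iM nM maxM] [iM' nM' _] MM'.
case: (maxM M' iM' MM') => // H.
apply: functional_extensionality => x; apply: propositional_extensionality; split; auto.
Qed.

Lemma pm_sep : pm_ring R -> forall N N' : R -> Prop, is_maximal N -> is_maximal N' -> N <> N' ->
  exists s t, [/\ ~ N s, ~ N' t & s * t = 0].
Proof.
move=> pm N N' mN mN' ne; apply: NNPP => H.
have [pN pN'] := (max_prime mN, max_prime mN').
have iL : is_ideal (fun x : R => x = 0).
  split => //; [by move=> x y -> ->; rewrite subr0 | by move=> r x ->; rewrite mulr0].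
pose S z := exists s t, [/\ ~ N s, ~ N' t & z = s * t].
have mS : multS S.
  split; first by exists 1, 1; rewrite mulr1; split => //; [case: pN | case: pN'].
  move=> x y [s [t [ns nt ->]]] [s' [t' [ns' nt' ->]]]; exists (s * s'), (t * t').
  split; last by rewrite mulrACA.
  - by case: pN => _ _ pp /pp [].
  - by case: pN' => _ _ pp /pp [].
have [|Q [pQ _ dQ]] := zorn_prime iL mS.
  by move=> z [s [t [ns nt ->]]] st0; apply: H; exists s, t.
have QN : subset_of Q N.
  move=> x Qx; apply: NNPP => nx; apply: (dQ x) => //; exists x, 1; rewrite mulr1.
  by split => //; case: pN'.
have QN' : subset_of Q N'.
  move=> x Qx; apply: NNPP => nx; apply: (dQ x) => //; exists 1, x; rewrite mul1r.
  by split => //; case: pN.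
have [M [_ _ uM]] := pm Q pQ.
by apply: ne; rewrite (uM N mN QN) (uM N' mN' QN').
Qed.

Inductive spn (X : R -> Prop) : R -> Prop :=
| sp0 : spn X 0
| spS r x y : X x -> spn X y -> spn X (r * x + y).

Lemma spn_ideal X : is_ideal (spn X).
Proof.
have spD u v : spn X u -> spn X v -> spn X (u + v).
  elim=> [|r x y Xx _ IH] Sv; first by rewrite add0r.
  by rewrite -addrA; apply: spS => //; apply: IH.
have spN u : spn X u -> spn X (- u).
  elim=> [|r x y Xx _ IH]; first by rewrite oppr0; apply: sp0.
  by rewrite opprD -mulNr; apply: spS.
split; first exact: sp0.
- by move=> x y Sx Sy; apply: spD => //; apply: spN.
- move=> r u; elim=> [|r' x y Xx _ IH]; first by rewrite mulr0; apply: sp0.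
  by rewrite mulrDr mulrA; apply: spS.
Qed.

Lemma spn_sub X x : X x -> spn X x.
Proof. by move=> Xx; rewrite -[x]addr0 -[x]mul1r; apply: spS => //; apply: sp0. Qed.

End Gen.
Lemma maxspec_eq (R : comNzRingType) (x y : MaxSpec R) : proj1_sig x = proj1_sig y -> x = y.
Proof. case: x => x px; case: y => y py /= E; subst y; f_equal; apply: proof_irrelevance. Qed.

Lemma pr_ideal (R : comNzRingType) (P : R -> Prop) : is_prime P -> is_ideal P.
Proof. by case. Qed.
Lemma mx_ideal (R : comNzRingType) (P : R -> Prop) : is_maximal P -> is_ideal P.
Proof. by case. Qed.
Lemma pr_not1 (R : comNzRingType) (P : R -> Prop) : is_prime P -> ~ P 1.
Proof. by case. Qed.
Lemma mx_not1 (R : comNzRingType) (P : R -> Prop) : is_maximal P -> ~ P 1.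
Proof. by case. Qed.
Lemma pr_mul (R : comNzRingType) (P : R -> Prop) x y : is_prime P -> P (x * y) -> P x \/ P y.
Proof. by case=> _ _ H; apply: H. Qed.

Section Main.
Variables (A B : comNzRingType) (f : {rmorphism A -> B}).
Hypotheses (finj : injective f) (pm : pm_ring A) (dense : dense_subring f)
  (wcn : weak_completely_normal f).

Lemma contract_prime (M : B -> Prop) : is_prime M -> is_prime (contract f M).
Proof.
move=> [[M0 MB MM] nM1 pM]; split; rewrite /contract.
- split; first by rewrite rmorph0.
  + by move=> x y Mx My; rewrite rmorphB; apply: MB.
  + by move=> r x Mx; rewrite rmorphM; apply: MM.
- by rewrite rmorph1.
- by move=> x y; rewrite rmorphM => /pM.
Qed.

Lemma uniq_over (P N1 N2 : A -> Prop) : is_prime P -> is_maximal N1 -> is_maximal N2 ->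
  subset_of P N1 -> subset_of P N2 -> N1 = N2.
Proof.
move=> pP m1 m2 s1 s2; have [M [_ _ uM]] := pm pP.
by rewrite (uM _ m1 s1) (uM _ m2 s2).
Qed.

Lemma phi_ex (M : MaxSpec B) : exists N : MaxSpec A, subset_of (contract f (proj1_sig M)) (proj1_sig N).
Proof.
have pP := contract_prime (max_prime (proj2_sig M)).
have [N [mN PN _]] := pm pP.
by exists (exist _ N mN).
Qed.

Definition phi (M : MaxSpec B) : MaxSpec A :=
  proj1_sig (constructive_indefinite_description _ (phi_ex M)).

Lemma phiP M : subset_of (contract f (proj1_sig M)) (proj1_sig (phi M)).
Proof. exact: (proj2_sig (constructive_indefinite_description _ (phi_ex M))). Qed.

Lemma phi_uniq M (N : MaxSpec A) : subset_of (contract f (proj1_sig M)) (proj1_sig N) -> phi M = N.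
Proof.
move=> sN; apply: maxspec_eq.
apply: (uniq_over (contract_prime (max_prime (proj2_sig M)))) => //.
- exact: proj2_sig.
- exact: proj2_sig.
- exact: phiP.
Qed.

Lemma zero_ideal (R : comNzRingType) : is_ideal (fun x : R => x = 0).
Proof.
split => //; [by move=> x y -> ->; rewrite subr0 | by move=> r x ->; rewrite mulr0].
Qed.

Lemma lift_max (N : MaxSpec A) (L : B -> Prop) : is_ideal L ->
  (forall a, ~ proj1_sig N a -> ~ L (f a)) ->
  exists M : MaxSpec B, phi M = N /\ subset_of L (proj1_sig M).
Proof.
move=> iL dL; have pN := max_prime (proj2_sig N).
pose S z := exists a, ~ proj1_sig N a /\ z = f a.
have mS : multS S.
  split; first by exists 1; rewrite rmorph1; split => //; case: pN.
  move=> x y [a [na ->]] [b [nb ->]]; exists (a * b); rewrite rmorphM; split => //.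
  by case: pN => _ _ pp /pp [].
have [|Q [pQ LQ dQ]] := zorn_prime iL mS; first by move=> s [a [na ->]]; apply: dL.
have [|M [mM QM]] := exists_max (pr_ideal pQ); first exact: pr_not1 pQ.
exists (exist _ M mM); split; last by move=> x /LQ /QM.
apply: maxspec_eq; apply: (uniq_over (contract_prime pQ)).
- exact: proj2_sig.
- exact: proj2_sig.
- move=> a Qa; exact: (@phiP (exist _ M mM) a (QM _ Qa)).
- by move=> a Qa; apply: NNPP => na; apply: (dQ (f a)) => //; exists a.
Qed.

Lemma phi_surj (N : MaxSpec A) : exists M, phi M = N.
Proof.
have [|M [? _]] := @lift_max N _ (zero_ideal B); last by exists M.
move=> a na fa0; apply: na; have -> : a = 0 by apply: finj; rewrite fa0 rmorph0.
exact: my_ideal0 (mx_ideal (proj2_sig N)).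
Qed.

Lemma comp_eq (M1 M2 : B -> Prop) : is_maximal M1 -> is_maximal M2 ->
  subset_of (contract f M1) (contract f M2) -> M1 = M2.
Proof.
move=> m1 m2 c12; apply: max_ext => // b M1b; apply: NNPP => nb.
have p2 := max_prime m2.
have nrb : ~ Defs.rad M2 b by move=> [n Hn]; apply: nb; apply: prime_pow Hn.
have [a [nra [x fx]]] := dense (mx_ideal m2) nrb.
have : contract f M1 x by rewrite /contract fx; apply: my_idealM (mx_ideal m1) M1b.
move=> /c12; rewrite /contract fx => /(pr_mul p2) [M2a|//].
by apply: nra; exists 1%N; rewrite expr1.
Qed.

Lemma phi_inj : injective phi.
Proof.
move=> M1 M2 E; apply: maxspec_eq.
case: (classic (proj1_sig M1 = proj1_sig M2)) => // ne.
have m1 := proj2_sig M1; have m2 := proj2_sig M2.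
case: (classic (subset_of (contract f (proj1_sig M1)) (contract f (proj1_sig M2)))) => [c12|n12].
  exact: comp_eq.
case: (classic (subset_of (contract f (proj1_sig M2)) (contract f (proj1_sig M1)))) => [c21|n21].
  by apply: esym; apply: comp_eq.
exfalso; apply: (wcn m1 m2 ne n12 n21).
have pQ := max_prime (proj2_sig (phi M1)).
exists (proj1_sig (phi M1)); split; split => // I H.
- by move=> x /(H _ erefl); apply: phiP.
- by rewrite E => x /(H _ erefl); apply: phiP.
Qed.

Definition psi (N : MaxSpec A) : MaxSpec B :=
  proj1_sig (constructive_indefinite_description _ (phi_surj N)).

Lemma psiK : cancel psi phi.
Proof. move=> N; exact: (proj2_sig (constructive_indefinite_description _ (phi_surj N))). Qed.

Lemma phiK : cancel phi psi.
Proof. by move=> M; apply: phi_inj; rewrite psiK. Qed.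

Lemma psi_cont : max_continuous psi.
Proof.
move=> Z [I HI].
exists (fun a => forall M : MaxSpec B, subset_of I (proj1_sig M) -> proj1_sig M (f a)).
move=> N; rewrite HI; split.
  move=> IpsiN a Ja; rewrite -(psiK N); apply: phiP; exact: Ja.
move=> JN.
pose G x := forall K : B -> Prop, is_ideal K -> subset_of I K -> K x.
have iG : is_ideal G.
  split.
  - by move=> K iK _; apply: my_ideal0.
  - by move=> x y Gx Gy K iK IK; apply: my_idealB => //; [apply: Gx | apply: Gy].
  - by move=> r x Gx K iK IK; apply: my_idealM => //; apply: Gx.
have [|M [E GM]] := @lift_max N G iG.
  move=> a na Ga; apply: na; apply: JN => M IM.
  exact: Ga (mx_ideal (proj2_sig M)) IM.
rewrite -E phiK => x Ix; apply: GM => K iK IK; exact: IK.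
Qed.

Lemma phi_cont : max_continuous phi.
Proof.
move=> Z [J HJ].
exists (fun b => forall M' : MaxSpec B, subset_of J (proj1_sig (phi M')) -> proj1_sig M' b).
move=> M0; rewrite HJ; split; first by move=> JM b Ib; apply: Ib.
move=> IM0; apply: NNPP => nJ.
have [j Hj] := not_all_ex_not _ _ nJ; have [Jj nj] := imply_to_and _ _ Hj.
set N0 := proj1_sig (phi M0) in nj *.
have mN0 : is_maximal N0 := proj2_sig (phi M0).
have pN0 := max_prime mN0.
pose X x := J x \/ exists s, ~ N0 s /\ s * x = 0.
have sp1 : spn X 1.
  apply: NNPP => n1; have [N' [mN' sN']] := exists_max (spn_ideal X) n1.
  have JN' : subset_of J N' by move=> x Jx; apply: sN'; apply: spn_sub; left.
  have ne : N0 <> N' by move=> E; apply: nj; rewrite E; apply: JN'.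
  have [s [t [ns nt st]]] := pm_sep pm mN0 mN' ne.
  by apply: nt; apply: sN'; apply: spn_sub; right; exists s.
have claim : forall y, spn X y -> exists s, ~ N0 s /\
    forall Q N : A -> Prop, is_prime Q -> is_maximal N -> subset_of Q N ->
      subset_of J N -> ~ N y -> Q s.
  move=> y; elim=> [|r x y' Xx _ [s' [ns' Hs']]].
    exists 1; split; first exact: mx_not1 mN0.
    by move=> Q N _ mN _ _ []; apply: my_ideal0 (mx_ideal mN).
  case: Xx => [Jx|[s0 [ns0 s0x]]].
    exists s'; split => // Q N pQ mN QN JN nN; apply: (Hs' Q N pQ mN QN JN) => Ny'.
    by apply: nN; apply: my_idealD (mx_ideal mN) _ Ny'; apply: my_idealM (mx_ideal mN) (JN _ Jx).
  exists (s0 * s'); split; first by move=> /(pr_mul pN0) [].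
  move=> Q N pQ mN QN JN nN.
  case: (classic (N y')) => Ny'.
    have nx : ~ N x.
      by move=> Nx; apply: nN; apply: my_idealD (mx_ideal mN) _ Ny'; apply: my_idealM (mx_ideal mN) Nx.
    have : Q (s0 * x) by rewrite s0x; apply: my_ideal0 (pr_ideal pQ).
    case/(pr_mul pQ) => [Qs0|/QN //].
    by apply: my_idealMr; [exact: pr_ideal pQ | exact: Qs0].
  by apply: my_idealM (pr_ideal pQ) _; apply: (Hs' Q N pQ mN QN JN).
have [s [ns Hs]] := claim _ sp1.
apply: ns; apply: (@phiP M0); rewrite /contract; apply: IM0 => M' JM'.
apply: (Hs (contract f (proj1_sig M')) (proj1_sig (phi M'))).
- exact: contract_prime (max_prime (proj2_sig M')).
- exact: proj2_sig.
- exact: phiP.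
- exact: JM'.
- exact: mx_not1 (proj2_sig (phi M')).
Qed.

End Main.

Theorem theorem4p8 (A B : comNzRingType) (f : {rmorphism A -> B}) :
  injective f -> pm_ring A -> dense_subring f -> weak_completely_normal f ->
  max_homeomorphic A B.
Proof.
move=> finj pm dense wcn.
exists (psi finj pm), (phi f pm).
split.
- by apply: psiK.
- by apply: phiK.
- by apply: psi_cont.
- by apply: phi_cont.
Qed.
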